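(* Let $\Gamma=(V,E)$ be a layered graph with unique minimal vertex $*$. Then $A(\Gamma)\cong T(V_+)/R_V$, where $R_V$ is the two-sided ideal of $T(V_+)$ generated by $\{\tilde e(\pi,i)-\tilde e(\pi',i): \pi\approx\pi',\ 0\le i\le \|\pi\|\}$.
   Context: A layered graph is a finite directed graph $\Gamma=(V,E)$ with $V=\bigsqcup_{i=0}^{N}V_i$ such that every edge $(v,w)\in E$ with $v\in V_i$ has $w\in V_{i-1}$. Write $V_+=\bigsqcup_{i\ge1}V_i$ and $S(v)=\{w:(v,w)\in E\}$; it is assumed that $S(v)\neq\emptyset$ for every $v\in V_+$. $\Gamma$ has unique minimal vertex $*$ if $V_0=\{*\}$. A path is a sequence of edges $\pi=(e_1,\dots,e_m)$ with head of $e_i$ = tail of $e_{i+1}$, of length $\|\pi\|=m$; $\pi\approx\pi'$ means same length, same start and same end. Fix a field $\mathbb F$; $T(X)$ is the free associative algebra on $X$. For a path $\pi=(e_1,\dots,e_m)$ define $e(\pi,i)\in T(E)$ by $(t-e_1)(t-e_2)\cdots(t-e_m)=\sum_{i}e(\pi,i)t^i$ in $T(E)[t]$ with $t$ a central indeterminate. The universal labeling algebra is $A(\Gamma)=T(E)/R$, where $R$ is generated by $e(\pi,i)-e(\pi',i)$ for all $\pi\approx\pi'$, $0\le i\le\|\pi\|$. Let $\phi'':T(E)\to T(V_+)$ be the algebra map with $\phi''((v,w))=v-w$ if $w\neq *$ and $\phi''((v,w))=v$ if $w=*$, and set $\tilde e(\pi,i)=\phi''(e(\pi,i))$. *)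

(* Defs.v *)
From HB Require Import structures.
From mathcomp Require Import all_boot all_order all_algebra.
Set Implicit Arguments. Unset Strict Implicit. Unset Printing Implicit Defensive.
Import GRing.Theory.
Local Open Scope ring_scope.

(* The free associative algebra T(X) over a field F.                        *)
(* An element is represented by a finite formal sum of monomials            *)
(* (coefficient, word); two representations denote the same element of      *)
(* T(X) iff they have the same coefficient function [nc_coef].              *)
Section FreeAlg.
Variables (F : fieldType) (X : eqType).

Definition ncexpr := seq (F * seq X).

Definition nc_coef (p : ncexpr) (w : seq X) : F := \sum_(t <- p | t.2 == w) t.1.

Definition nc_zero : ncexpr := [::].
Definition nc_one : ncexpr := [:: (1, [::])].
Definition nc_var (x : X) : ncexpr := [:: (1, [:: x])].
Definition nc_add (p q : ncexpr) : ncexpr := p ++ q.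
Definition nc_scale (c : F) (p : ncexpr) : ncexpr := [seq (c * t.1, t.2) | t <- p].
Definition nc_sub (p q : ncexpr) : ncexpr := nc_add p (nc_scale (-1) q).
Definition nc_mul (p q : ncexpr) : ncexpr :=
  [seq (a.1 * b.1, a.2 ++ b.2) | a <- p, b <- q].
Definition nc_sum (ps : seq ncexpr) : ncexpr := flatten ps.

Definition nc_in_ideal (S : ncexpr -> Prop) (p : ncexpr) : Prop :=
  exists ts : seq (ncexpr * ncexpr * ncexpr),
    (forall t, t \in ts -> S t.1.2) /\
    forall w, nc_coef p w =
      nc_coef (nc_sum [seq nc_mul (nc_mul t.1.1 t.1.2) t.2 | t <- ts]) w.

(* e(pi, i): coefficient of t^i in (t - x_1)(t - x_2)...(t - x_m) *)
Fixpoint nc_elem (s : seq X) (i : nat) : ncexpr :=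
  match s with
  | [::] => if i == 0%N then nc_one else nc_zero
  | x :: s' => nc_sub (match i with 0%N => nc_zero | j.+1 => nc_elem s' j end)
                      (nc_mul (nc_var x) (nc_elem s' i))
  end.
End FreeAlg.

Section Subst.
Variables (F : fieldType) (X Y : eqType) (f : X -> ncexpr F Y).
Definition nc_subst (p : ncexpr F X) : ncexpr F Y :=
  nc_sum [seq nc_scale t.1 (foldr (fun x acc => nc_mul (f x) acc) (nc_one F Y) t.2)
         | t <- p].
End Subst.

(* V finite, layer : V -> nat gives V_i = layer^-1(i); adj v w = (v,w) in E *)
Section Layered.
Variables (V : finType) (layer : V -> nat) (adj : rel V) (star : V).

Definition layered_unique_min : Prop :=
  (forall v w, adj v w -> layer v = (layer w).+1) /\
  (forall v, (0 < layer v)%N -> exists w, adj v w) /\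
  (forall v, layer v = 0%N <-> v = star).

Definition Edge := {p : V * V | adj p.1 p.2}.
Definition Vplus := {v : V | (0 < layer v)%N}.

Definition is_gpath (s : seq Edge) : bool :=
  match s with
  | [::] => true
  | e :: s' => path (fun a b : Edge => (val a).2 == (val b).1) e s'
  end.

Definition gapprox (s s' : seq Edge) : Prop :=
  size s = size s' /\
  match s, s' with
  | e :: _, e' :: _ => (val e).1 = (val e').1 /\
                       (val (last e s)).2 = (val (last e' s')).2
  | _, _ => True
  end.

Variable F : fieldType.

Definition R_gen (p : ncexpr F Edge) : Prop :=
  exists s s' i, is_gpath s /\ is_gpath s' /\ gapprox s s' /\ (i <= size s)%N /\
    p = nc_sub (@nc_elem F Edge s i) (@nc_elem F Edge s' i).

(* the variable of T(V_+) attached to v, or 0 if v \notin V_+ (i.e. v = star) *)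
Definition ivar (v : V) : ncexpr F Vplus :=
  match (insub v : option Vplus) with Some u => nc_var F u | None => nc_zero F Vplus end.

(* phi''((v,w)) = v - w if w <> star, v if w = star *)
Definition phi2 (e : Edge) : ncexpr F Vplus := nc_sub (ivar (val e).1) (ivar (val e).2).

Definition etilde (s : seq Edge) (i : nat) : ncexpr F Vplus :=
  nc_subst phi2 (@nc_elem F Edge s i).

Definition RV_gen (q : ncexpr F Vplus) : Prop :=
  exists s s' i, is_gpath s /\ is_gpath s' /\ gapprox s s' /\ (i <= size s)%N /\
    q = nc_sub (etilde s i) (etilde s' i).
End Layered.

(* Main.v *)
Require Import Defs.
From HB Require Import structures.
From mathcomp Require Import all_boot all_order all_algebra.
From mathcomp Require Import ring.
Set Implicit Arguments. Unset Strict Implicit. Unset Printing Implicit Defensive.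
Import GRing.Theory.
Local Open Scope ring_scope.

Section Gen.
Variables (F : fieldType) (X : eqType).
Implicit Types (p q : ncexpr F X) (h : seq X -> F).

Definition L p h : F := \sum_(t <- p) t.1 * h t.2.
Definition eqv p q := forall h, L p h = L q h.

Lemma L_ext p h1 h2 : (forall u, h1 u = h2 u) -> L p h1 = L p h2.
Proof. by move=> e; apply: eq_bigr => t _; rewrite e. Qed.

Lemma L_nil h : L [::] h = 0. Proof. by rewrite /L big_nil. Qed.
Lemma L_cons t p h : L (t :: p) h = t.1 * h t.2 + L p h.
Proof. by rewrite /L big_cons. Qed.
Lemma L_cat p q h : L (p ++ q) h = L p h + L q h.
Proof. by rewrite /L big_cat. Qed.
Lemma L_add p q h : L (nc_add p q) h = L p h + L q h.
Proof. exact: L_cat. Qed.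
Lemma L_scale c p h : L (nc_scale c p) h = c * L p h.
Proof. by rewrite /L big_map mulr_sumr; apply: eq_bigr => t _ /=; rewrite mulrA. Qed.
Lemma L_sub p q h : L (nc_sub p q) h = L p h - L q h.
Proof. by rewrite L_add L_scale mulN1r. Qed.
Lemma L_one h : L (nc_one F X) h = h [::].
Proof. by rewrite L_cons L_nil addr0 mul1r. Qed.
Lemma L_var x h : L (nc_var F x) h = h [:: x].
Proof. by rewrite L_cons L_nil addr0 mul1r. Qed.
Lemma L_zero h : L (nc_zero F X) h = 0.
Proof. exact: L_nil. Qed.
Lemma L_mul p q h : L (nc_mul p q) h = L p (fun u => L q (fun v => h (u ++ v))).
Proof.
rewrite /L /nc_mul big_allpairs_dep; apply: eq_bigr => a _.
by rewrite mulr_sumr; apply: eq_bigr => b _ /=; rewrite mulrA.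
Qed.
Lemma L_flatten ps h : L (nc_sum ps) h = \sum_(p <- ps) L p h.
Proof. by rewrite /L /nc_sum big_flatten. Qed.
Lemma L_addh p h1 h2 : L p (fun u => h1 u + h2 u) = L p h1 + L p h2.
Proof. by rewrite /L -big_split; apply: eq_bigr => t _; rewrite mulrDr. Qed.
Lemma L_subh p h1 h2 : L p (fun u => h1 u - h2 u) = L p h1 - L p h2.
Proof. by rewrite /L -sumrB; apply: eq_bigr => t _; rewrite mulrBr. Qed.
Lemma L_scaleh p c h : L p (fun u => c * h u) = c * L p h.
Proof. by rewrite /L mulr_sumr; apply: eq_bigr => t _; rewrite mulrCA. Qed.
Lemma L_sumh (I : Type) (r : seq I) p (g : I -> seq X -> F) :
  L p (fun u => \sum_(i <- r) g i u) = \sum_(i <- r) L p (g i).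
Proof.
rewrite /L exchange_big; apply: eq_bigr => t _; by rewrite mulr_sumr.
Qed.
Lemma L_zeroh p : L p (fun _ => 0) = 0.
Proof. by rewrite /L big1 // => t _; rewrite mulr0. Qed.

Lemma coef_L p w : nc_coef p w = L p (fun u => (u == w)%:R).
Proof.
rewrite /nc_coef /L big_mkcond; apply: eq_bigr => t _.
by case: eqP => _; rewrite ?mulr1 ?mulr0.
Qed.

Lemma L_words p (U : seq (seq X)) h : uniq U -> {subset [seq t.2 | t <- p] <= U} ->
  L p h = \sum_(u <- U) nc_coef p u * h u.
Proof.
move=> uU; elim: p => [|t p IH] sub.
  by rewrite L_nil big1 // => u _; rewrite /nc_coef big_nil mul0r.
rewrite L_cons IH; last by move=> u Hu; apply: sub; rewrite inE Hu orbT.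
have tU : t.2 \in U by apply: sub; rewrite inE eqxx.
have -> : \sum_(u <- U) nc_coef (t :: p) u * h u =
  \sum_(u <- U) ((t.2 == u)%:R * t.1 * h u) + \sum_(u <- U) nc_coef p u * h u.
  rewrite -big_split; apply: eq_bigr => u _ /=.
  rewrite /nc_coef big_cons; case: eqP => _; rewrite ?mul1r ?mul0r ?add0r //.
  by rewrite mulrDl.
congr (_ + _); rewrite (bigD1_seq t.2) //= eqxx mul1r big1 ?addr0 // => u.
by rewrite eq_sym => /negbTE ->; rewrite !mul0r.
Qed.

Lemma L_cong p q : (forall w, nc_coef p w = nc_coef q w) -> eqv p q.
Proof.
move=> e h.
pose U := undup ([seq t.2 | t <- p] ++ [seq t.2 | t <- q]).
have uU : uniq U by apply: undup_uniq.
rewrite (@L_words p U) //; last by move=> u Hu; rewrite mem_undup mem_cat Hu.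
rewrite (@L_words q U) //; last by move=> u Hu; rewrite mem_undup mem_cat Hu orbT.
by apply: eq_bigr => u _; rewrite e.
Qed.

Variable S : ncexpr F X -> Prop.

Definition idl_sum (ts : seq (ncexpr F X * ncexpr F X * ncexpr F X)) :=
  nc_sum [seq nc_mul (nc_mul t.1.1 t.1.2) t.2 | t <- ts].

Lemma in_idealP p : nc_in_ideal S p <->
  exists ts, (forall t, t \in ts -> S t.1.2) /\ eqv p (idl_sum ts).
Proof.
split=> [[ts [H1 H2]]|[ts [H1 H2]]]; exists ts; split => //.
  exact: L_cong.
by move=> w; rewrite !coef_L.
Qed.

Lemma ideal_eqv p q : nc_in_ideal S p -> eqv p q -> nc_in_ideal S q.
Proof.
move=> /in_idealP [ts [H1 H2]] e; apply/in_idealP; exists ts; split => // h.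
by rewrite -e.
Qed.

Lemma L_idl ts h : L (idl_sum ts) h = \sum_(t <- ts) L (nc_mul (nc_mul t.1.1 t.1.2) t.2) h.
Proof. by rewrite /idl_sum L_flatten big_map. Qed.

Lemma ideal_zero p : (forall h, L p h = 0) -> nc_in_ideal S p.
Proof.
move=> e; apply/in_idealP; exists [::]; split => // h.
by rewrite e L_idl big_nil.
Qed.

Lemma ideal_gen s : S s -> nc_in_ideal S s.
Proof.
move=> Hs; apply/in_idealP; exists [:: (nc_one F X, s, nc_one F X)]; split.
  by move=> t; rewrite inE => /eqP ->.
move=> h; rewrite L_idl big_cons big_nil addr0 /= !L_mul L_one.
by apply: L_ext => u; rewrite L_one cats0.
Qed.

Lemma ideal_add p q : nc_in_ideal S p -> nc_in_ideal S q -> nc_in_ideal S (nc_add p q).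
Proof.
move=> /in_idealP [ts1 [A1 B1]] /in_idealP [ts2 [A2 B2]].
apply/in_idealP; exists (ts1 ++ ts2); split.
  by move=> t; rewrite mem_cat => /orP [] ?; [apply: A1 | apply: A2].
by move=> h; rewrite L_add B1 B2 !L_idl big_cat.
Qed.

Lemma ideal_mull a p : nc_in_ideal S p -> nc_in_ideal S (nc_mul a p).
Proof.
move=> /in_idealP [ts [A B]].
apply/in_idealP; exists [seq (nc_mul a t.1.1, t.1.2, t.2) | t <- ts]; split.
  by move=> t /mapP [t' Ht' ->]; exact: A Ht'.
move=> h; rewrite L_mul (L_ext _ (fun u => B (fun v => h (u ++ v)))).
rewrite L_idl big_map.
rewrite (L_ext _ (fun u => L_idl ts (fun v => h (u ++ v)))) L_sumh.
apply: eq_bigr => t _ /=; rewrite !L_mul; apply: L_ext => u.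
rewrite !L_mul; apply: L_ext => v; apply: L_ext => w; apply: L_ext => x.
by rewrite !catA.
Qed.

Lemma ideal_mulr p b : nc_in_ideal S p -> nc_in_ideal S (nc_mul p b).
Proof.
move=> /in_idealP [ts [A B]].
apply/in_idealP; exists [seq (t.1.1, t.1.2, nc_mul t.2 b) | t <- ts]; split.
  by move=> t /mapP [t' Ht' ->]; exact: A Ht'.
move=> h; rewrite L_mul B !L_idl big_map.
apply: eq_bigr => t _ /=; rewrite !L_mul; apply: L_ext => u.
apply: L_ext => v; rewrite L_mul; apply: L_ext => w; apply: L_ext => x.
by rewrite catA.
Qed.

Lemma ideal_scale c p : nc_in_ideal S p -> nc_in_ideal S (nc_scale c p).
Proof.
move=> Hp; apply: (ideal_eqv (ideal_mull [:: (c, [::])] Hp)) => h.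
by rewrite L_mul L_scale L_cons L_nil addr0; congr (_ * _).
Qed.

Lemma ideal_sub p q : nc_in_ideal S p -> nc_in_ideal S q -> nc_in_ideal S (nc_sub p q).
Proof. by move=> Hp Hq; apply: ideal_add => //; apply: ideal_scale. Qed.

Lemma ideal_sum ps : (forall p, p \in ps -> nc_in_ideal S p) -> nc_in_ideal S (nc_sum ps).
Proof.
elim: ps => [|p ps IH] H; first by apply: ideal_zero => h; rewrite L_flatten big_nil.
apply: (ideal_eqv (ideal_add (H p (mem_head _ _)) (IH _))) => [q Hq|h].
  by apply: H; rewrite inE Hq orbT.
by rewrite L_add !L_flatten ?big_cons.
Qed.

Lemma ideal_eqv0 p q : nc_in_ideal S p -> (forall h, L p h = L q h) -> nc_in_ideal S q.
Proof. exact: ideal_eqv. Qed.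
End Gen.

Section Swap.
Variables (F : fieldType) (X Y : eqType).
Lemma L_swap (p : ncexpr F X) (q : ncexpr F Y) (k : seq X -> seq Y -> F) :
  L p (fun u => L q (fun v => k u v)) = L q (fun v => L p (fun u => k u v)).
Proof.
rewrite /L; under eq_bigr do rewrite mulr_sumr.
rewrite exchange_big; apply: eq_bigr => b _; rewrite mulr_sumr.
by apply: eq_bigr => a _; rewrite mulrCA.
Qed.

End Swap.

Section Subst.
Variables (F : fieldType) (X Y : eqType).
Implicit Types (k : X -> ncexpr F Y) (p q : ncexpr F X) (h : seq Y -> F).

Definition mono (k : X -> ncexpr F Y) (u : seq X) :=
  foldr (fun x acc => nc_mul (k x) acc) (nc_one F Y) u.

Lemma L_mono_nil k h : L (mono k [::]) h = h [::].
Proof. exact: L_one. Qed.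
Lemma L_mono_cons k x u h :
  L (mono k (x :: u)) h = L (k x) (fun a => L (mono k u) (fun b => h (a ++ b))).
Proof. exact: L_mul. Qed.

Lemma L_subst k p h : L (nc_subst k p) h = L p (fun u => L (mono k u) h).
Proof.
by rewrite /nc_subst L_flatten big_map; apply: eq_bigr => t _; rewrite L_scale.
Qed.

Lemma L_mono_cat k u v h : L (mono k (u ++ v)) h =
  L (mono k u) (fun a => L (mono k v) (fun b => h (a ++ b))).
Proof.
elim: u h => [|x u IH] h; first by rewrite cat0s L_mono_nil.
rewrite cat_cons !L_mono_cons; apply: L_ext => a; rewrite IH.
by apply: L_ext => c; apply: L_ext => d; rewrite catA.
Qed.

Lemma L_subst_mul k p q h :
  L (nc_subst k (nc_mul p q)) h = L (nc_mul (nc_subst k p) (nc_subst k q)) h.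
Proof.
rewrite L_subst !L_mul L_subst; apply: L_ext => u.
rewrite (L_ext _ (fun v => L_mono_cat k u v h)) (L_swap (mono k u) (nc_subst k q)).
rewrite (L_subst k q); apply: L_ext => v; exact: L_swap.
Qed.

Lemma L_mul_eqv (Z : eqType) (p p' q q' : ncexpr F Z) :
  eqv p p' -> eqv q q' -> eqv (nc_mul p q) (nc_mul p' q').
Proof.
move=> e1 e2 h; rewrite !L_mul e1; apply: L_ext => u; exact: e2.
Qed.

Lemma subst_ideal (k : X -> ncexpr F Y) S T p :
  (forall s, S s -> nc_in_ideal T (nc_subst k s)) ->
  nc_in_ideal S p -> nc_in_ideal T (nc_subst k p).
Proof.
move=> HS /in_idealP [ts [A B]].
pose ps := [seq nc_mul (nc_mul (nc_subst k t.1.1) (nc_subst k t.1.2)) (nc_subst k t.2) | t <- ts].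
apply: (@ideal_eqv _ _ _ (nc_sum ps)).
  apply: ideal_sum => q /mapP [t Ht ->]; apply: ideal_mulr; apply: ideal_mull.
  exact: HS (A t Ht).
move=> h; rewrite L_flatten big_map L_subst B L_idl.
apply: eq_bigr => t _; rewrite -L_subst.
rewrite L_subst_mul; apply: L_mul_eqv => // h'; by rewrite L_subst_mul.
Qed.

Lemma subst_congr_ideal (k1 k2 : X -> ncexpr F Y) T :
  (forall x, nc_in_ideal T (nc_sub (k1 x) (k2 x))) ->
  forall p, nc_in_ideal T (nc_sub (nc_subst k1 p) (nc_subst k2 p)).
Proof.
move=> Hk.
have Hm : forall u, nc_in_ideal T (nc_sub (mono k1 u) (mono k2 u)).
  elim=> [|x u IH]; first by apply: ideal_zero => h; rewrite L_sub subrr.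
  apply: (ideal_eqv (ideal_add (ideal_mulr (mono k1 u) (Hk x)) (ideal_mull (k2 x) IH))).
  move=> h; rewrite L_add L_sub !L_mono_cons !L_mul L_sub (L_ext _ (fun a => L_sub _ _ _)) L_subh; ring.
move=> p.
apply: (@ideal_eqv _ _ _ (nc_sum [seq nc_scale t.1 (nc_sub (mono k1 t.2) (mono k2 t.2)) | t <- p])).
  by apply: ideal_sum => q /mapP [t Ht ->]; apply: ideal_scale.
move=> h; rewrite L_flatten big_map L_sub !L_subst -L_subh [in RHS]/L.
by apply: eq_bigr => t _; rewrite L_scale L_sub.
Qed.

Lemma L_subst_ext k1 k2 p h : (forall x h', L (k1 x) h' = L (k2 x) h') ->
  L (nc_subst k1 p) h = L (nc_subst k2 p) h.
Proof.
move=> e; rewrite !L_subst; apply: L_ext => u.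
elim: u h => [|x u IH] h; first by rewrite !L_mono_nil.
by rewrite !L_mono_cons e; apply: L_ext => a; rewrite IH.
Qed.

Lemma L_subst_sub k p q h : L (nc_subst k (nc_sub p q)) h = L (nc_subst k p) h - L (nc_subst k q) h.
Proof. by rewrite !L_subst L_sub. Qed.
End Subst.

Section Comp.
Variables (F : fieldType) (X Y : eqType).
Variable Z : eqType.
Lemma L_mono_comp (f : X -> ncexpr F Y) (g : Y -> ncexpr F Z) u (h : seq Z -> F) :
  L (mono (fun x => nc_subst g (f x)) u) h = L (mono f u) (fun a => L (mono g a) h).
Proof.
elim: u h => [|x u IH] h; first by rewrite !L_mono_nil.
rewrite !L_mono_cons L_subst; apply: L_ext => c.
rewrite (L_ext _ (fun a => IH _)) (L_swap (mono g c) (mono f u) (fun a d => L (mono g d) (fun b => h (a ++ b)))); apply: L_ext => d.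
by rewrite L_mono_cat.
Qed.

Lemma L_subst_comp (f : X -> ncexpr F Y) (g : Y -> ncexpr F Z) p (h : seq Z -> F) :
  L (nc_subst g (nc_subst f p)) h = L (nc_subst (fun x => nc_subst g (f x)) p) h.
Proof.
rewrite !L_subst; apply: L_ext => u; by rewrite L_mono_comp.
Qed.

Lemma L_subst_var p (h : seq X -> F) : L (nc_subst (@nc_var F X) p) h = L p h.
Proof.
rewrite L_subst; apply: L_ext => u; elim: u h => [|x u IH] h; first by rewrite L_mono_nil.
by rewrite L_mono_cons L_var IH.
Qed.

End Comp.

Section Elem.
Variables (F : fieldType) (X : eqType).
Implicit Types (h : seq X -> F).

Lemma elem_cons_S x s i : @nc_elem F X (x :: s) i.+1 =
  nc_sub (@nc_elem F _ s i) (nc_mul (nc_var F x) (@nc_elem F _ s i.+1)).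
Proof. by []. Qed.
Lemma elem_cons_0 x s : @nc_elem F X (x :: s) 0 =
  nc_sub (nc_zero F X) (nc_mul (nc_var F x) (@nc_elem F _ s 0)).
Proof. by []. Qed.

Lemma elem_big s i h : (size s < i)%N -> L (@nc_elem F X s i) h = 0.
Proof.
elim: s i h => [|x s IH] [|i] h // Hi.
  by have -> : @nc_elem F X [::] i.+1 = nc_zero F X by []; rewrite L_zero.
have Hi' : (size s < i)%N := Hi.
rewrite elem_cons_S L_sub (IH i h Hi') L_mul (L_ext _ (fun u => IH i.+1 _ (ltnW Hi'))).
by rewrite L_zeroh subr0.
Qed.

Lemma elem_size s h : L (@nc_elem F X s (size s)) h = h [::].
Proof.
elim: s h => [|x s IH] h; first by rewrite L_one.
have -> : size (x :: s) = (size s).+1 by [].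
rewrite elem_cons_S L_sub IH L_mul (L_ext _ (fun u => elem_big _ (ltnSn (size s)))).
by rewrite L_zeroh subr0.
Qed.

Lemma elem_top x s h : L (@nc_elem F X (x :: s) (size s)) h = - \sum_(e <- x :: s) h [:: e].
Proof.
elim: s x h => [|y s IH] x h.
  rewrite elem_cons_0 L_sub L_zero L_mul L_var /= L_one big_cons big_nil; ring.
have -> : size (y :: s) = (size s).+1 by [].
rewrite elem_cons_S L_sub IH L_mul L_var.
have -> : L (@nc_elem F _ (y :: s) (size s).+1) (fun v => h ([:: x] ++ v)) = h [:: x].
  by rewrite (elem_size (y :: s)).
rewrite (big_cons _ _ x); ring.
Qed.
End Elem.

Section Graph.
Variables (F : fieldType) (V : finType) (layer : V -> nat) (adj : rel V) (star : V).
Hypothesis H : layered_unique_min layer adj star.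

Definition nxt (v : V) : V := odflt v [pick w | adj v w].

Lemma nxtP v : (0 < layer v)%N -> adj v (nxt v).
Proof.
case: H => _ [H2 _] /H2 [w Hw]; rewrite /nxt; case: pickP => [w' //|/(_ w)].
by rewrite Hw.
Qed.

Fixpoint pth (n : nat) (v : V) : seq (Edge adj) :=
  match n with
  | 0 => [::]
  | n'.+1 => match (insub (v, nxt v) : option (Edge adj)) with
             | Some e => e :: pth n' (nxt v)
             | None => [::]
             end
  end.

Definition good (v : V) (s : seq (Edge adj)) : Prop :=
  [/\ is_gpath s,
      (forall e s', s = e :: s' -> (val e).1 = v /\ (val (last e s')).2 = star)
    & (s = [::] -> v = star)].

Lemma good_cons e s v w : (val e).1 = v -> (val e).2 = w -> good w s -> good v (e :: s).
Proof.
move=> e1 e2 [g1 g2 g3]; split => //.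
- case: s g1 g2 g3 => [|e' s'] //= g1 g2 _.
  have [E1 _] := g2 e' s' erefl.
  by rewrite e2 E1 eqxx.
- move=> e0 s0 [<- <-]; split => //.
  case: s g1 g2 g3 => [|e' s'] g1 g2 g3 /=; first by rewrite e2 g3.
  by case: (g2 e' s' erefl).
Qed.

Lemma star0 : layer star = 0%N.
Proof. by case: H => _ [_ H3]; apply/H3. Qed.

Lemma pth_good n v : layer v = n -> size (pth n v) = n /\ good v (pth n v).
Proof.
elim: n v => [|n IH] v Hv.
  case: H => _ [_ H3]; have := (proj1 (H3 v) Hv) => ->.
  by split => //; split.
have Hadj : adj v (nxt v) by apply: nxtP; rewrite Hv.
have Hw : layer (nxt v) = n.
  by case: H => H1 _; move: (H1 _ _ Hadj); rewrite Hv => -[].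
rewrite /= (@insubT _ (fun p : V * V => adj p.1 p.2) (Edge adj) (v, nxt v) Hadj).
have [S1 S2] := IH _ Hw; split; first by rewrite /= S1.
by apply: (good_cons _ _ S2); rewrite SubK.
Qed.

Lemma good_gapprox v s1 s2 : good v s1 -> good v s2 -> size s1 = size s2 ->
  gapprox s1 s2.
Proof.
case: s1 => [|e1 s1] [_ A1 _]; case: s2 => [|e2 s2] [_ A2 _] // Hs; split => //.
have [B1 C1] := A1 _ _ erefl; have [B2 C2] := A2 _ _ erefl.
by rewrite B1 B2 C1 C2.
Qed.

Definition Pv (v : V) := pth (layer v) v.
Definition sumv (s : seq (Edge adj)) : ncexpr F (Edge adj) := nc_sum [seq nc_var F e | e <- s].

Lemma L_sumv s h : L (sumv s) h = \sum_(e <- s) h [:: e].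
Proof. by rewrite /sumv L_flatten big_map; apply: eq_bigr => e _; rewrite L_var. Qed.

Definition gg (u : Vplus layer) : ncexpr F (Edge adj) := sumv (Pv (val u)).
Definition ff : Edge adj -> ncexpr F (Vplus layer) := @phi2 V layer adj F.

Lemma L_ivar_g x h : L (@ivar V layer F x) (fun u => L (mono gg u) h) = \sum_(e <- Pv x) h [:: e].
Proof.
rewrite /ivar; case: insubP => [u Hu Hv | Hn].
  rewrite L_var L_mono_cons (L_ext _ (fun a => L_mono_nil _ _)) /gg Hv L_sumv.
  by apply: eq_bigr => e _; rewrite cats0.
rewrite L_zero /Pv.
have -> : layer x = 0%N by move: Hn; rewrite lt0n negbK => /eqP.
by rewrite big_nil.
Qed.

Lemma ivar_star h : L (@ivar V layer F star) h = 0.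
Proof. by rewrite /ivar insubN ?star0 // L_zero. Qed.

Lemma ivar_val (u : Vplus layer) h : L (@ivar V layer F (val u)) h = h [:: u].
Proof. by rewrite /ivar valK L_var. Qed.

Lemma tele n v h : layer v = n ->
  \sum_(e <- pth n v) (L (@ivar V layer F (val e).1) h - L (@ivar V layer F (val e).2) h)
  = L (@ivar V layer F v) h - L (@ivar V layer F star) h.
Proof.
elim: n v => [|n IH] v Hv.
  case: H => _ [_ H3]; have := (proj1 (H3 v) Hv) => ->.
  by rewrite big_nil subrr.
have Hadj : adj v (nxt v) by apply: nxtP; rewrite Hv.
have Hw : layer (nxt v) = n.
  by case: H => H1 _; move: (H1 _ _ Hadj); rewrite Hv => -[].
rewrite /= (@insubT _ (fun p : V * V => adj p.1 p.2) (Edge adj) (v, nxt v) Hadj) big_cons IH // SubK /=.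
ring.
Qed.

Lemma key4 u h : L (nc_subst ff (gg u)) h = h [:: u].
Proof.
rewrite L_subst /gg L_sumv.
rewrite (eq_bigr (fun e : Edge adj => L (@ivar V layer F (val e).1) h - L (@ivar V layer F (val e).2) h)).
  by rewrite /Pv (tele h erefl) ivar_star subr0 ivar_val.
move=> e _; rewrite L_mono_cons (L_ext _ (fun a => L_mono_nil _ _)).
rewrite (L_ext _ (fun a => congr1 h (cats0 a))) /ff /phi2 L_sub.
by [].
Qed.

Lemma key3 (e : Edge adj) : nc_in_ideal (@R_gen V adj F) (nc_sub (nc_var F e) (nc_subst gg (ff e))).
Proof.
set v := (val e).1; set w := (val e).2.
have Hadj : adj v w := valP e.
have Hl : layer v = (layer w).+1 by case: H => H1 _; exact: H1.
have [szw gw] := pth_good (erefl (layer w)).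
have [szv gv] := pth_good (erefl (layer v)).
have g1 : good v (e :: Pv w) by apply: good_cons gw.
move: szv gv; rewrite -/(Pv v); case E2 : (Pv v) => [|e2 s2]; first by rewrite Hl.
move=> szv gv.
have ss : size s2 = size (Pv w) by move: szv; rewrite Hl szw /= => -[].
pose G := nc_sub (@nc_elem F _ (e :: Pv w) (size (Pv w))) (@nc_elem F _ (e2 :: s2) (size (Pv w))).
have HG : @R_gen V adj F G.
  exists (e :: Pv w), (e2 :: s2), (size (Pv w)); split; first by case: g1.
  split; first by case: gv.
  split; first by apply: (good_gapprox g1 gv); rewrite /= ss.
  by split; first exact: leqnSn.
apply: (ideal_eqv (ideal_scale (-1) (ideal_gen HG))) => h.
rewrite /G L_scale L_sub elem_top -ss elem_top L_sub L_var L_subst /ff /phi2 L_sub.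
rewrite !L_ivar_g E2 -/(Pv w) !big_cons; ring.
Qed.

Lemma key3' p : nc_in_ideal (@R_gen V adj F) (nc_sub p (nc_subst gg (nc_subst ff p))).
Proof.
apply: (ideal_eqv (subst_congr_ideal key3 p)) => h.
by rewrite !L_sub L_subst_var L_subst_comp.
Qed.
End Graph.

Theorem mainTheorem2 (F : fieldType) (V : finType) (layer : V -> nat)
    (adj : rel V) (star : V) :
  layered_unique_min layer adj star ->
  exists (f : Edge adj -> ncexpr F (Vplus layer))
         (g : Vplus layer -> ncexpr F (Edge adj)),
    (forall p, nc_in_ideal (@R_gen V adj F) p ->
               nc_in_ideal (@RV_gen V layer adj F) (nc_subst f p)) /\
    (forall q, nc_in_ideal (@RV_gen V layer adj F) q ->
               nc_in_ideal (@R_gen V adj F) (nc_subst g q)) /\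
    (forall p, nc_in_ideal (@R_gen V adj F)
                 (nc_sub p (nc_subst g (nc_subst f p)))) /\
    (forall q, nc_in_ideal (@RV_gen V layer adj F)
                 (nc_sub q (nc_subst f (nc_subst g q)))).
Proof.
move=> H.
exists (@ff F V layer adj), (@gg F V layer adj).
split.
  move=> p Hp; apply: (subst_ideal _ Hp) => s [s1 [s2 [i [h1 [h2 [h3 [h4 ->]]]]]]].
  have HG : @RV_gen V layer adj F (nc_sub (@etilde V layer adj F s1 i) (@etilde V layer adj F s2 i)).
    by exists s1, s2, i.
  apply: (ideal_eqv (ideal_gen HG)) => h.
  by rewrite L_subst_sub L_sub.
split.
  move=> q Hq; apply: (subst_ideal _ Hq) => s [s1 [s2 [i [h1 [h2 [h3 [h4 ->]]]]]]].
  have HG : @R_gen V adj F (nc_sub (@nc_elem F _ s1 i) (@nc_elem F _ s2 i)).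
    by exists s1, s2, i.
  have DA := key3' H (@nc_elem F _ s1 i).
  have DB := key3' H (@nc_elem F _ s2 i).
  apply: (ideal_eqv (ideal_add (ideal_sub (ideal_gen HG) DA) DB)) => h.
  rewrite L_subst_sub /etilde /ff L_add !L_sub; ring.
split; first by move=> p; exact: key3' H p.
move=> q; apply: ideal_zero => h.
rewrite L_sub L_subst_comp.
rewrite (@L_subst_ext _ _ _ _ (@nc_var F (Vplus layer))); first by rewrite L_subst_var subrr.
by move=> x h'; rewrite (key4 H) L_var.
Qed.
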